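(* Let $m\geq 1$, $n\geq 3$, and let $i,j\in V$. There exists a walk of length $2n-1$ from $i$ to $j$ in $D^m_n$ if and only if there exists a walk of length $n-1$ from $i$ to $j$ in $D^m_n$. In such cases, there are exactly $m$ distinct walks of length $2n-1$ from $i$ to $j$ in $D^m_n$.
   Context: For integers $m\geq 1$, $n\geq 3$, the oriented Dutch windmill graph $D^m_n$ is the directed graph with vertex set $V=\{1,2,\ldots,m(n-1)+1\}$ whose directed edges $(a,b)$ are exactly: $(1,(k-1)(n-1)+2)$ for $k\in\{1,\ldots,m\}$; $((k-1)(n-1)+i,(k-1)(n-1)+i+1)$ for $k\in\{1,\ldots,m\}$ and $i\in\{2,\ldots,n-1\}$; and $((k-1)(n-1)+n,1)$ for $k\in\{1,\ldots,m\}$. A walk is a sequence of vertices $\langle v_1,\ldots,v_r\rangle$ in which each $(v_t,v_{t+1})$ is an edge; its length is $r-1$; walks are distinct when they are distinct sequences. *)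

(* Defs.v *)
From mathcomp Require Import all_boot.
Set Implicit Arguments. Unset Strict Implicit. Unset Printing Implicit Defensive.

Definition nverts (m n : nat) : nat := m * (n - 1) + 1.

Definition in_V (m n v : nat) : bool := (1 <= v) && (v <= nverts m n).

Definition dw_edge (m n : nat) (a b : nat) : bool :=
  [|| has (fun k => (a == 1) && (b == (k - 1) * (n - 1) + 2)) (iota 1 m),
      has (fun k => has (fun i => (a == (k - 1) * (n - 1) + i) &&
                                 (b == (k - 1) * (n - 1) + i + 1))
                         (iota 2 (n - 2))) (iota 1 m)
    | has (fun k => (a == (k - 1) * (n - 1) + n) && (b == 1)) (iota 1 m)].

Definition is_walk (m n : nat) (L i j : nat) (w : seq nat) : bool :=
  [&& size w == L.+1, all (in_V m n) w, head 0 w == i, last 0 w == j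
    & path (dw_edge m n) (head 0 w) (behead w)].

Definition vert (m n : nat) : finType := 'I_(nverts m n).
Definition vlab (m n : nat) (x : vert m n) : nat := (nat_of_ord x).+1.

Definition walks (m n L i j : nat) : {set (L.+1).-tuple (vert m n)} :=
  [set t : (L.+1).-tuple (vert m n) | is_walk m n L i j (map (@vlab m n) t)].

(* Main.v *)
Require Import Defs.
From mathcomp Require Import all_boot zify.
Set Implicit Arguments. Unset Strict Implicit.

Definition vtx (n k t : nat) := k * (n - 1) + t + 2.
Definition nx (n v : nat) := if (v - 2) %% (n - 1) == n - 2 then 1 else v + 1.
Definition succs (m n v : nat) : seq nat :=
  if v == 1 then [seq vtx n k 0 | k <- iota 0 m] else [:: nx n v].

Fixpoint gen (m n L v : nat) : seq (seq nat) :=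
  if L is L'.+1 then [seq s :: w | s <- succs m n v, w <- gen m n L' s]
  else [:: [::]].

Definition cnt m n L v j := count (fun w => last v w == j) (gen m n L v).

Lemma decomp_uniq d x y x' y' : y < d -> y' < d ->
  x * d + y = x' * d + y' -> x = x' /\ y = y'.
Proof.
move=> hy hy' E.
have Ey : y = y' by have := congr1 (modn^~ d) E; rewrite !modnMDl !modn_small.
subst y'; split => //.
have /eqP : x * d = x' * d by apply/eqP; rewrite -(eqn_add2r y) E.
have hd : 0 < d by case: (d) hy.
by rewrite eqn_pmul2r //; move/eqP.
Qed.

Lemma decomp m n v : 3 <= n -> in_V m n v -> v != 1 ->
  exists k t, [/\ k < m, t <= n - 2 & v = vtx n k t].
Proof.
move=> hn /andP[h1 h2] hv1.
have hd : 0 < n - 1 by lia.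
have E := divn_eq (v - 2) (n - 1).
have ht := ltn_pmod (v - 2) hd.
exists ((v - 2) %/ (n - 1)), ((v - 2) %% (n - 1)); split.
- rewrite ltn_divLR //. rewrite /nverts in h2. lia.
- lia.
- rewrite /vtx. move: E. set q := _ %/ _. set r := _ %% _. set p := q * _. lia.
Qed.

Lemma hasiotaP (P : pred nat) a b :
  reflect (exists2 k, a <= k < a + b & P k) (has P (iota a b)).
Proof.
apply: (iffP hasP) => -[k hk Pk]; exists k => //; by move: hk; rewrite mem_iota.
Qed.

Lemma nx_vtx n k t : 3 <= n -> t <= n - 2 ->
  nx n (vtx n k t) = if t == n - 2 then 1 else vtx n k t + 1.
Proof.
move=> hn ht; rewrite /nx /vtx.
have -> : k * (n - 1) + t + 2 - 2 = k * (n - 1) + t by rewrite addnK.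
rewrite modnMDl modn_small //; lia.
Qed.

Lemma in_V_vtx m n k t : 3 <= n -> k < m -> t <= n - 2 -> in_V m n (vtx n k t).
Proof.
move=> hn hk ht; rewrite /in_V /vtx /nverts.
have : k.+1 * (n - 1) <= m * (n - 1) by rewrite leq_mul2r hk orbT.
rewrite mulSn. set p := k * _. set q := m * _. lia.
Qed.

Lemma edge_center m n b : 3 <= n -> dw_edge m n 1 b = (b \in succs m n 1).
Proof.
move=> hn; rewrite /dw_edge /succs eqxx; apply/idP/idP.
- case/or3P.
  + case/hasiotaP => k hk /andP[_ /eqP ->].
    apply/mapP; exists (k - 1); first by rewrite mem_iota; lia.
    by rewrite /vtx addn0.
  + case/hasiotaP => k hk /hasiotaP [i hi /andP[/eqP E _]]; exfalso.
    move: E; set p := _ * _; lia.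
  + case/hasiotaP => k hk /andP[/eqP E _]; exfalso.
    move: E; set p := _ * _; lia.
- case/mapP => k hk ->; apply/orP; left; apply/hasiotaP.
  rewrite mem_iota in hk; exists k.+1; first lia.
  rewrite /vtx subSS subn0 /= addn0. done.
Qed.

Lemma edge_vtx m n k t b : 3 <= n -> k < m -> t <= n - 2 ->
  dw_edge m n (vtx n k t) b = (b == nx n (vtx n k t)).
Proof.
move=> hn hk ht; rewrite /dw_edge nx_vtx //; apply/idP/idP.
- case/or3P.
  + case/hasiotaP => k' _ /andP[/eqP E _]; exfalso; move: E; rewrite /vtx; set p := k * _; lia.
  + case/hasiotaP => k' hk' /hasiotaP [i hi /andP[/eqP E /eqP ->]].
    have E' : k * (n - 1) + t = (k' - 1) * (n - 1) + (i - 2).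
      move: E; rewrite /vtx; set p := _ * _; set q := _ * _; lia.
    have [_ Et] := @decomp_uniq (n - 1) _ t _ (i - 2) ltac:(lia) ltac:(lia) E'.
    rewrite ifN //; lia.
  + case/hasiotaP => k' hk' /andP[/eqP E /eqP ->].
    have E' : k * (n - 1) + t = (k' - 1) * (n - 1) + (n - 2).
      move: E; rewrite /vtx; set p := _ * _; set q := _ * _; lia.
    have [_ Et] := @decomp_uniq (n - 1) _ t _ (n - 2) ltac:(lia) ltac:(lia) E'.
    by rewrite ifT //; apply/eqP.
- case: ifP => /eqP Ht /eqP ->.
  + apply/orP; right; apply/orP; right; apply/hasiotaP; exists k.+1; first lia.
    rewrite /vtx subSS subn0 /= eqxx andbT; apply/eqP. set p := _ * _; lia.
  + apply/orP; right; apply/orP; left; apply/hasiotaP; exists k.+1; first lia.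
    apply/hasiotaP; exists (t + 2); first lia.
    rewrite /vtx subSS subn0 /=; apply/andP; split; apply/eqP; set p := _ * _; lia.
Qed.

Lemma vtx_neq1 n k t : (vtx n k t == 1) = false.
Proof. by rewrite /vtx addn2. Qed.
Lemma vtxS n k t : vtx n k t + 1 = vtx n k t.+1.
Proof. rewrite /vtx; set p := k * _; lia. Qed.

Lemma succsP m n v b : 3 <= n -> in_V m n v -> dw_edge m n v b = (b \in succs m n v).
Proof.
move=> hn hv; have [->|v1] := eqVneq v 1; first exact: edge_center.
have [k [t [hk ht ->]]] := decomp hn hv v1.
by rewrite edge_vtx // /succs vtx_neq1 mem_seq1.
Qed.

Lemma succs_inV m n v s : 3 <= n -> in_V m n v -> s \in succs m n v -> in_V m n s.
Proof.
move=> hn hv; have [->|v1] := eqVneq v 1.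
  by rewrite /succs eqxx => /mapP [k]; rewrite mem_iota => hk ->; apply: in_V_vtx; lia.
have [k [t [hk ht ->]]] := decomp hn hv v1.
rewrite /succs vtx_neq1.
rewrite mem_seq1 nx_vtx // => /eqP ->.
case: ifP => Ht; first by rewrite /in_V /nverts /= leq_addl.
rewrite vtxS.
apply: in_V_vtx => //; move/negbT: Ht; lia.
Qed.

Lemma path_inV m n v w : 3 <= n -> in_V m n v -> path (dw_edge m n) v w -> all (in_V m n) w.
Proof.
move=> hn; elim: w v => [//|s w IH] v hv /= /andP[e p].
have hs : in_V m n s by apply: (succs_inV hn hv); rewrite -succsP.
by rewrite hs (IH s).
Qed.

Lemma mem_gen m n L v w : 3 <= n -> in_V m n v ->
  (w \in gen m n L v) = (size w == L) && path (dw_edge m n) v w.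
Proof.
move=> hn; elim: L v w => [|L IH] v w hv /=.
  by rewrite mem_seq1; case: w.
apply/allpairsPdep/idP.
  move=> [s [w' [hs hw' ->]]] /=.
  have hsv := succs_inV hn hv hs.
  by rewrite (IH s w' hsv) in hw'; rewrite succsP // hs.
case: w => [//|s w'] /= /andP[hsz /andP[e p]].
rewrite succsP // in e.
exists s, w'; split => //.
rewrite IH; first by rewrite -eqSS hsz p.
exact: (succs_inV hn hv e).
Qed.

Lemma uniq_succs m n v : 3 <= n -> uniq (succs m n v).
Proof.
move=> hn; rewrite /succs; case: ifP => // _.
rewrite map_inj_uniq ?iota_uniq // => x y /eqP.
rewrite /vtx !addn0 eqn_add2r eqn_pmul2r; [by move/eqP | lia].
Qed.

Lemma uniq_gen m n L v : 3 <= n -> uniq (gen m n L v).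
Proof.
move=> hn; elim: L v => [//|L IH] v /=.
apply: allpairs_uniq_dep => //; first exact: uniq_succs.
by move=> [x1 y1] [x2 y2] _ _ /= [-> ->].
Qed.

Lemma cnt_S m n L v j :
  cnt m n L.+1 v j = sumn [seq cnt m n L s j | s <- succs m n v].
Proof.
rewrite /cnt /= /allpairs_dep count_flatten -map_comp; congr sumn.
by apply: eq_map => s /=; rewrite count_map.
Qed.

Lemma cnt_nc m n L k t j : 3 <= n -> t <= n - 2 ->
  cnt m n L.+1 (vtx n k t) j = cnt m n L (nx n (vtx n k t)) j.
Proof.
by move=> hn ht; rewrite cnt_S /succs vtx_neq1 /= addn0.
Qed.

Lemma cnt_c m n L j :
  cnt m n L.+1 1 j = sumn [seq cnt m n L (vtx n k 0) j | k <- iota 0 m].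
Proof. by rewrite cnt_S /succs eqxx -map_comp. Qed.

Lemma cnt_run m n L k j : 3 <= n -> forall s t, t + s = n - 2 ->
  cnt m n (L + s.+1) (vtx n k t) j = cnt m n L 1 j.
Proof.
move=> hn; elim=> [|s IH] t hts.
  by rewrite addn1 cnt_nc ?nx_vtx ?ifT //; lia.
rewrite addnS cnt_nc ?nx_vtx ?ifN; try lia.
rewrite vtxS.
apply: IH; lia.
Qed.

Lemma sumn_const (c : nat) (s : seq nat) : sumn [seq c | _ <- s] = size s * c.
Proof. by elim: s => //= x s ->; rewrite mulSn. Qed.

Lemma cnt_loop m n L j : 3 <= n -> cnt m n (n + L) 1 j = m * cnt m n L 1 j.
Proof.
move=> hn; have -> : n + L = (L + (n - 2).+1).+1 by lia.
rewrite cnt_c (eq_map (g := fun _ => cnt m n L 1 j)); last first.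
  by move=> k; apply: cnt_run.
by rewrite sumn_const size_iota.
Qed.

Lemma cnt_in m n L k t j : 3 <= n -> t + L <= n - 2 ->
  cnt m n L (vtx n k t) j = (vtx n k (t + L) == j).
Proof.
move=> hn; elim: L t => [|L IH] t h.
  by rewrite /cnt /= !addn0.
rewrite cnt_nc ?nx_vtx ?ifN; try lia.
rewrite vtxS.
by rewrite IH ?addSnnS //; lia.
Qed.

Lemma count_le1 (P : pred nat) s : uniq s ->
  (forall x y, P x -> P y -> x = y) -> count P s <= 1.
Proof.
move=> us H; rewrite -size_filter.
case E: (filter P s) => [//|x r].
have ux : uniq (x :: r) by rewrite -E filter_uniq.
have Px : P x.
  have : x \in filter P s by rewrite E mem_head.
  by rewrite mem_filter => /andP[].
have sub : {subset x :: r <= [:: x]}.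
  move=> y; rewrite -E mem_filter => /andP[Py _].
  by rewrite mem_seq1 (H _ _ Py Px).
exact: (uniq_leq_size ux sub).
Qed.

Lemma cnt_small m n L j : 3 <= n -> L <= n - 1 -> cnt m n L 1 j <= 1.
Proof.
move=> hn; case: L => [|L] hL; first by rewrite /cnt /=; case: (1 == j).
rewrite cnt_c (eq_map (g := fun k => nat_of_bool (vtx n k L == j))); last first.
  by move=> k; rewrite cnt_in //; lia.
rewrite sumn_count; apply: count_le1; first exact: iota_uniq.
move=> x y /eqP <- /eqP; rewrite /vtx => /eqP.
rewrite !eqn_add2r eqn_pmul2r; [by move/eqP | lia].
Qed.

Lemma cnt_main m n i j : 3 <= n -> in_V m n i ->
  cnt m n (2 * n - 1) i j = m * cnt m n (n - 1) i j /\ cnt m n (n - 1) i j <= 1.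
Proof.
move=> hn hi; have [->|v1] := eqVneq i 1.
  have -> : 2 * n - 1 = n + (n - 1) by lia.
  by rewrite cnt_loop // cnt_small.
have [k [t [hk ht ->]]] := decomp hn hi v1.
have -> : 2 * n - 1 = (n + t) + (n - 2 - t).+1 by lia.
have -> : n - 1 = t + (n - 2 - t).+1 by lia.
rewrite !cnt_run ?cnt_loop ?cnt_small //; lia.
Qed.

Lemma is_walk_cons m n L i j x w : 3 <= n -> in_V m n i ->
  is_walk m n L i j (x :: w) = [&& x == i, w \in gen m n L i & last i w == j].
Proof.
move=> hn hi; rewrite /is_walk /= eqSS.
have [->|_] := eqVneq x i; last by rewrite !(andFb, andbF).
rewrite mem_gen // hi /=.
case p: (path _ _ _); last by rewrite !andbF.
by rewrite (path_inV hn hi p) !andbT.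
Qed.

Lemma walk_cnt m n L i j : 3 <= n -> in_V m n i ->
  (exists w, is_walk m n L i j w) <-> 0 < cnt m n L i j.
Proof.
move=> hn hi; rewrite /cnt -has_count; split.
  move=> [[|x w]]; first by rewrite /is_walk.
  rewrite is_walk_cons // => /and3P[_ hw hl].
  by apply/hasP; exists w.
move/hasP => [w hw hl]; exists (i :: w).
by rewrite is_walk_cons // eqxx hw hl.
Qed.

Lemma card_walks m n L i j : 3 <= n -> in_V m n i ->
  #|walks m n L i j| = cnt m n L i j.
Proof.
move=> hn hi.
pose h := fun t : (L.+1).-tuple (vert m n) => map (@vlab m n) t.
have vinj : injective (@vlab m n) by move=> x y [] /val_inj.
have hinj : injective h by move=> t1 t2 /(inj_map vinj) /val_inj.
rewrite cardE -(size_map h) /cnt -size_filter.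
rewrite -(size_map (cons i) [seq w <- gen m n L i | last i w == j]).
apply: perm_size; apply: uniq_perm.
- rewrite map_inj_uniq //; exact: enum_uniq.
- rewrite map_inj_uniq ?filter_uniq ?uniq_gen //; by move=> a b [].

move=> x.
have -> : (x \in map (cons i) (filter (fun w => last i w == j) (gen m n L i)))
    = is_walk m n L i j x.
  case: x => [|y w]; first by rewrite /is_walk /=; apply/negbTE/mapP => -[].
  rewrite is_walk_cons //; apply/mapP/idP.
    move=> [w' hw' [-> ->]]; rewrite mem_filter in hw'.
    by case/andP: hw' => -> ->; rewrite eqxx.
  move=> /and3P[/eqP -> hw hl]; exists w => //; by rewrite mem_filter hl.
apply/mapP/idP.
  by move=> [t]; rewrite mem_enum inE => Ht ->.
move=> Hw.
have x0 : vert m n by exists 0; rewrite /nverts addn1.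
pose f := fun v : nat => (insubd x0 v.-1 : vert m n).
have Hs : size (map f x) == L.+1.
  by rewrite size_map; move: Hw; rewrite /is_walk => /andP[].
have hx : map (@vlab m n) (map f x) = x.
  rewrite -map_comp; apply: map_id_in => v hv /=.
  move: Hw; rewrite /is_walk => /and3P[_ /allP /(_ v hv) /andP[h1 h2] _].
  by rewrite /vlab val_insubd ifT ?prednK //; rewrite /nverts in h2 *; lia.
exists (Tuple Hs); last by rewrite /h /= hx.
by rewrite mem_enum inE /= hx.
Qed.

Unset Implicit Arguments.

Theorem lemma2p4 (m n i j : nat) :
  1 <= m -> 3 <= n -> in_V m n i -> in_V m n j ->
  ((exists w : seq nat, is_walk m n (2 * n - 1) i j w) <->
   (exists w : seq nat, is_walk m n (n - 1) i j w)) /\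
  ((exists w : seq nat, is_walk m n (n - 1) i j w) ->
   #|walks m n (2 * n - 1) i j| = m).
Proof.
move=> hm hn hi hj.
have [E1 E2] := cnt_main j hn hi.
rewrite !walk_cnt // E1 muln_gt0 hm /=; split => // hc.
rewrite card_walks // E1.
have -> : cnt m n (n - 1) i j = 1 by lia.
by rewrite muln1.
Qed.
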